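(* Let $a\in\omega\setminus\{0\}$ and $h(n)=2^{(a^n)}$. Then $\mathfrak d(\neq^*,h)\le\mathfrak d(1/a)$ and $\mathfrak b(\neq^*,h)\ge\mathfrak b(1/a)$.
   Context: For bit sequences $x,y\in{}^\omega2$, $x\leftrightarrow y=\{n:x(n)=y(n)\}$; for $Z\subseteq\omega$, $\underline\rho(Z)=\liminf_n|Z\cap[0,n)|/n$. $\mathfrak d(p)$ is the least cardinality of $G\subseteq{}^\omega2$ such that for every $x\in{}^\omega2$ some $y\in G$ has $\underline\rho(x\leftrightarrow y)>p$; $\mathfrak b(p)$ is the least cardinality of $F\subseteq{}^\omega2$ such that for every $y\in{}^\omega2$ some $x\in F$ has $\underline\rho(x\leftrightarrow y)\le p$. A function $y$ is $h$-bounded if $y(n)<h(n)$ for all $n$. $\mathfrak d(\neq^*,h)$ is the least cardinality of a set $G$ of $h$-bounded functions such that for every $x\in{}^\omega\omega$ some $y\in G$ satisfies $x(n)\ne y(n)$ for all but finitely many $n$; $\mathfrak b(\neq^*,h)$ is the least cardinality of $F\subseteq{}^\omega\omega$ such that for every $h$-bounded $y$ some $x\in F$ satisfies $x(n)=y(n)$ for infinitely many $n$. *)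

(* Defs.v *)
From Stdlib Require Import Reals Lra Lia List.
From Coquelicot Require Import Coquelicot.
Import ListNotations.
Open Scope R_scope.

(* x <-> y = {n : x n = y n}, as a boolean predicate on nat *)
Definition agree (x y : nat -> bool) : nat -> bool := fun n => Bool.eqb (x n) (y n).

Definition count_below (Z : nat -> bool) (n : nat) : nat :=
  length (filter Z (seq 0 n)).

Definition lower_density (Z : nat -> bool) : Rbar :=
  LimInf_seq (fun n => INR (count_below Z n) / INR n).

Definition card_le {X Y : Type} (A : X -> Prop) (B : Y -> Prop) : Prop :=
  exists f : X -> Y, (forall x, A x -> B (f x)) /\
    (forall x x', A x -> A x' -> f x = f x' -> x = x').

Definition d_witness (p : R) (G : (nat -> bool) -> Prop) : Prop :=
  forall x : nat -> bool, exists y, G y /\ Rbar_lt (Finite p) (lower_density (agree x y)).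

Definition b_witness (p : R) (F : (nat -> bool) -> Prop) : Prop :=
  forall y : nat -> bool, exists x, F x /\ Rbar_le (lower_density (agree x y)) (Finite p).

Definition h_bounded (h : nat -> nat) (y : nat -> nat) : Prop :=
  forall n, (y n < h n)%nat.

Definition dneq_witness (h : nat -> nat) (G : (nat -> nat) -> Prop) : Prop :=
  (forall y, G y -> h_bounded h y) /\
  forall x : nat -> nat, exists y, G y /\ exists N, forall n, (N <= n)%nat -> x n <> y n.

Definition bneq_witness (h : nat -> nat) (F : (nat -> nat) -> Prop) : Prop :=
  forall y : nat -> nat, h_bounded h y ->
    exists x, F x /\ forall N, exists n, (N <= n)%nat /\ x n = y n.

(* Main.v *)
Require Import Defs.
From Stdlib Require Import Reals Lra Lia List ClassicalEpsilon Classical.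
From Coquelicot Require Import Coquelicot.
Open Scope R_scope.

Lemma LimInf_correct (u : nat -> R) : is_LimInf_seq u (LimInf_seq u).
Proof.
  apply is_LimInf_supInf_seq. rewrite LimInf_SupInf_seq. apply Sup_seq_correct.
Qed.

Lemma liminf_le (v : nat -> R) (c : R) :
  (forall N, exists n, (N <= n)%nat /\ v n <= c) -> Rbar_le (LimInf_seq v) (Finite c).
Proof.
  intro H. pose proof (LimInf_correct v) as L.
  destruct (LimInf_seq v) as [l| |]; simpl in *.
  - destruct (Rle_dec l c) as [?|Hn]; [assumption|].
    assert (He : 0 < (l - c)/2) by lra.
    destruct (L (mkposreal _ He)) as [_ [N HN]]. simpl in HN.
    destruct (H N) as [n [Hn1 Hn2]]. specialize (HN n Hn1). lra.
  - destruct (L c) as [N HN]. destruct (H N) as [n [Hn1 Hn2]].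
    specialize (HN n Hn1). lra.
  - exact I.
Qed.

Fixpoint S_ (a n : nat) : nat :=
  match n with 0 => 0%nat | Datatypes.S n => (S_ a n + a ^ n)%nat end.

Lemma pow_pos' a n : (0 < a)%nat -> (0 < a ^ n)%nat.
Proof. intro. induction n; simpl; nia. Qed.

Lemma S_geom a n : (a * S_ a n + 1 = S_ a (Datatypes.S n))%nat.
Proof. induction n; simpl in *; [lia|]. rewrite Nat.mul_add_distr_l. nia. Qed.

Lemma S_mono a n n' : (n <= n')%nat -> (S_ a n <= S_ a n')%nat.
Proof. induction 1; simpl; lia. Qed.

Lemma blk_ex a (ha : (0 < a)%nat) m :
  {n | (S_ a n <= m < S_ a (Datatypes.S n))%nat}.
Proof.
  induction m.
  - exists 0%nat. simpl. pose proof (pow_pos' a 0 ha). lia.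
  - destruct IHm as [n Hn].
    destruct (Compare_dec.lt_dec (Datatypes.S m) (S_ a (Datatypes.S n))).
    + exists n. lia.
    + exists (Datatypes.S n). pose proof (pow_pos' a (Datatypes.S n) ha).
      change (S_ a (Datatypes.S (Datatypes.S n))) with (S_ a (Datatypes.S n) + a ^ (Datatypes.S n))%nat.
      lia.
Defined.

Definition blk a ha m := proj1_sig (blk_ex a ha m).

Lemma blk_spec a ha m : (S_ a (blk a ha m) <= m < S_ a (Datatypes.S (blk a ha m)))%nat.
Proof. unfold blk. destruct (blk_ex a ha m); auto. Qed.

Lemma blk_unique a ha m n : (S_ a n <= m < S_ a (Datatypes.S n))%nat -> blk a ha m = n.
Proof.
  intro H. pose proof (blk_spec a ha m) as B.
  destruct (Compare_dec.lt_eq_lt_dec (blk a ha m) n) as [[Hl|He]|Hl]; auto.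
  - pose proof (S_mono a _ _ Hl). lia.
  - pose proof (S_mono a _ _ Hl). lia.
Qed.

Fixpoint bin (l : list bool) : nat :=
  match l with nil => 0%nat | b :: l => if b then (2 * bin l + 1)%nat else (2 * bin l)%nat end.

Lemma bin_bound l : (bin l < 2 ^ length l)%nat.
Proof. induction l as [|b l IH]; simpl; [lia|]. destruct b; lia. Qed.

Lemma testbit_bin l j : (j < length l)%nat -> Nat.testbit (bin l) j = nth j l false.
Proof.
  revert j; induction l as [|b l IH]; intros j Hj; cbn [bin length nth] in *; [lia|].
  destruct j; destruct b.
  - apply Nat.testbit_odd_0.
  - apply Nat.testbit_even_0.
  - rewrite Nat.testbit_odd_succ by lia. apply IH; lia.
  - rewrite Nat.testbit_even_succ by lia. apply IH; lia.
Qed.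

Definition encode a (y : nat -> bool) (n : nat) : nat :=
  bin (map (fun j => y (S_ a n + j)%nat) (seq 0 (a ^ n))).

Definition decode a ha (z : nat -> nat) (m : nat) : bool :=
  Nat.testbit (z (blk a ha m)) (m - S_ a (blk a ha m)).

Lemma encode_bound a y n : (encode a y n < 2 ^ (a ^ n))%nat.
Proof.
  unfold encode. pose proof (bin_bound (map (fun j => y (S_ a n + j)%nat) (seq 0 (a ^ n)))).
  rewrite length_map, length_seq in H. exact H.
Qed.

Lemma decode_block a ha z y n m :
  (S_ a n <= m < S_ a (Datatypes.S n))%nat -> z n = encode a y n -> decode a ha z m = y m.
Proof.
  intros Hm Hz. unfold decode. rewrite (blk_unique a ha m n Hm), Hz.
  unfold encode. simpl in Hm.
  rewrite testbit_bin by (rewrite length_map, length_seq; lia).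
  rewrite nth_indep with (d' := y (S_ a n + 0)%nat) by (rewrite length_map, length_seq; lia).
  rewrite (map_nth (fun j => y (S_ a n + j)%nat)), seq_nth by lia. f_equal. lia.
Qed.

Lemma count_app (u : nat -> bool) k l :
  count_below u (k + l) = (count_below u k + length (filter u (seq k l)))%nat.
Proof. unfold count_below. rewrite seq_app, filter_app, length_app. reflexivity. Qed.

Lemma filter_nil (u : nat -> bool) k l :
  (forall m, (k <= m < k + l)%nat -> u m = false) -> filter u (seq k l) = nil.
Proof.
  revert k; induction l; intros k H; simpl; auto.
  rewrite H by lia. apply IHl. intros; apply H; lia.
Qed.

Lemma count_le (u : nat -> bool) k : (count_below u k <= k)%nat.
Proof. unfold count_below. pose proof (filter_length_le u (seq 0 k)). rewrite length_seq in H. exact H. Qed.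

Lemma key a (ha : (0 < a)%nat) (u : nat -> bool) :
  (forall N, exists n, (N <= n)%nat /\
     forall m, (S_ a n <= m < S_ a (Datatypes.S n))%nat -> u m = false) ->
  Rbar_le (lower_density u) (Finite (/ INR a)).
Proof.
  intro H. unfold lower_density. apply liminf_le. intro N.
  destruct (H N) as [n [Hn Hu]].
  exists (S_ a (Datatypes.S n)). split.
  - assert (forall k, (k <= S_ a k)%nat).
    { induction k; simpl; [lia|]. pose proof (pow_pos' a k ha). lia. }
    pose proof (H0 (Datatypes.S n)). lia.
  - simpl S_. rewrite count_app, filter_nil by (intros; apply Hu; simpl; lia).
    simpl length. rewrite Nat.add_0_r.
    pose proof (count_le u (S_ a n)).
    pose proof (S_geom a n). simpl S_ in H1.
    pose proof (pow_pos' a n ha).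
    assert (Ha : 0 < INR a) by (apply lt_0_INR; lia).
    assert (Hs : 0 < INR (S_ a n + a ^ n)) by (apply lt_0_INR; lia).
    apply le_INR in H0. rewrite <- H1, plus_INR, mult_INR in Hs |- *. change (INR 1) with 1 in *.
    apply Rle_trans with (INR (S_ a n) / (INR a * INR (S_ a n) + 1)).
    + change (INR 1) with 1 in *. unfold Rdiv. apply Rmult_le_compat_r; [|lra]. left; apply Rinv_0_lt_compat. lra.
    + apply Rmult_le_reg_r with (INR a * INR (S_ a n) + 1); [lra|].
      unfold Rdiv. rewrite Rmult_assoc, Rinv_l by lra.
      rewrite Rmult_plus_distr_l, <- Rmult_assoc, Rinv_l by lra.
      pose proof (pos_INR (S_ a n)). pose proof (Rinv_0_lt_compat _ Ha). lra.
Qed.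

Definition xt a ha (x : nat -> nat) : nat -> bool := fun m => negb (decode a ha x m).

Lemma xt_block a ha x y n m :
  (S_ a n <= m < S_ a (Datatypes.S n))%nat -> x n = encode a y n -> agree (xt a ha x) y m = false.
Proof.
  intros Hm Hx. unfold agree, xt. rewrite (decode_block a ha x y n m Hm Hx).
  destruct (y m); reflexivity.
Qed.

Theorem mainTheorem8 (a : nat) (ha : (0 < a)%nat) :
  let h := fun n : nat => (2 ^ (a ^ n))%nat in
  (* d(≠*,h) <= d(1/a) *)
  (forall G : (nat -> bool) -> Prop, d_witness (/ INR a) G ->
     exists G' : (nat -> nat) -> Prop, dneq_witness h G' /\ card_le G' G) /\
  (* b(1/a) <= b(≠*,h) *)
  (forall F : (nat -> nat) -> Prop, bneq_witness h F ->
     exists F' : (nat -> bool) -> Prop, b_witness (/ INR a) F' /\ card_le F' F).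
Proof.
  intro h. split.
  - intros G HG.
    exists (fun z => exists y, G y /\ z = encode a y). split; [split|].
    + intros z [y [_ ->]] n. apply encode_bound.
    + intro x. destruct (HG (xt a ha x)) as [y [Gy Hd]].
      exists (encode a y). split; [eauto|].
      apply NNPP. intro Hne.
      assert (Hinf : forall N, exists n, (N <= n)%nat /\
                forall m, (S_ a n <= m < S_ a (Datatypes.S n))%nat -> agree (xt a ha x) y m = false).
      { intro N. apply NNPP. intro Hn. apply Hne. exists N. intros n Hn1 E.
        apply Hn. exists n. split; auto. intros m Hm. exact (xt_block a ha x y n m Hm E). }
      pose proof (key a ha _ Hinf) as K.
      destruct (lower_density (agree (xt a ha x) y)); simpl in *; lra.
    + exists (fun z => epsilon (inhabits (fun _ => false)) (fun y => G y /\ z = encode a y)).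
      split.
      * intros z Hz. exact (proj1 (epsilon_spec (inhabits (fun _ => false)) _ Hz)).
      * intros z z' Hz Hz' E.
        rewrite (proj2 (epsilon_spec (inhabits (fun _ => false)) _ Hz)), (proj2 (epsilon_spec (inhabits (fun _ => false)) _ Hz')).
        cbv beta in E. rewrite E. reflexivity.
  - intros F HF.
    exists (fun z => exists x, F x /\ z = xt a ha x). split.
    + intro y. destruct (HF (encode a y) (encode_bound a y)) as [x [Fx Hx]].
      exists (xt a ha x). split; [eauto|].
      apply key; auto. intro N. destruct (Hx N) as [n [Hn E]].
      exists n. split; auto. intros m Hm. exact (xt_block a ha x y n m Hm E).
    + exists (fun z => epsilon (inhabits (fun _ => 0%nat)) (fun x => F x /\ z = xt a ha x)).
      split.
      * intros z Hz. exact (proj1 (epsilon_spec (inhabits (fun _ => 0%nat)) _ Hz)).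
      * intros z z' Hz Hz' E.
        rewrite (proj2 (epsilon_spec (inhabits (fun _ => 0%nat)) _ Hz)), (proj2 (epsilon_spec (inhabits (fun _ => 0%nat)) _ Hz')).
        cbv beta in E. rewrite E. reflexivity.
Qed.
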